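(* The functor $i:\overline{\mathrm{Pro}}(\mathcal{C})\to \mathrm{Pro}(\mathcal{C})$ is full.
   Context: Let $\mathcal{C}$ be a category. $\mathrm{Pro}(\mathcal{C})$ has objects diagrams $I\to\mathcal{C}$ with $I$ small directed and $\mathrm{Hom}(X,Y)=\lim_s\operatorname{colim}_t\mathrm{Hom}_{\mathcal{C}}(X_t,Y_s)$. $\overline{\mathrm{Pro}}(\mathcal{C})$ has objects $F:A\to\mathcal{C}$ with $A$ a cofinite directed poset of infinite height (poset as category with $u\to v$ iff $u\ge v$), and morphisms $F^A\to G^B$ the connected components $[\alpha,\phi]$ of the poset of pairs $(\alpha,\phi)$, $\alpha:B\to A$ strictly increasing, $\phi:F\circ\alpha\to G$ natural, ordered by $(\alpha',\phi')\ge(\alpha,\phi)$ iff $\alpha'\ge\alpha$ pointwise and $\phi'_b=\phi_b\circ F(\alpha'(b)\to\alpha(b))$. The functor $i$ is the identity on objects and sends $[\alpha,\phi]$ to the pro-morphism represented by the maps $\phi_b:F_{\alpha(b)}\to G_b$, $b\in B$. *)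

(* Defs.v *)
From Stdlib Require Import List Classical.
Set Implicit Arguments.
Unset Strict Implicit.

Record Category := {
  Ob :> Type;
  Hom : Ob -> Ob -> Type;
  comp : forall a b c : Ob, Hom b c -> Hom a b -> Hom a c;
  idm : forall a : Ob, Hom a a;
  comp_idl : forall a b (f : Hom a b), comp (idm b) f = f;
  comp_idr : forall a b (f : Hom a b), comp f (idm a) = f;
  comp_assoc : forall a b c d (f : Hom c d) (g : Hom b c) (h : Hom a b),
      comp f (comp g h) = comp (comp f g) h
}.
Arguments Hom {_} _ _.
Arguments comp {_ _ _ _} _ _.
Arguments idm {_} _.

Record Poset := {
  pcar :> Type;
  ple : pcar -> pcar -> Prop;
  ple_refl : forall a, ple a a;
  ple_antisym : forall a b, ple a b -> ple b a -> a = b;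
  ple_trans : forall a b c, ple a b -> ple b c -> ple a c
}.
Arguments ple {p} _ _.

Definition plt {A : Poset} (a b : A) : Prop := ple a b /\ a <> b.

Definition directed (A : Poset) : Prop :=
  (exists a : A, True) /\ forall a b : A, exists c : A, ple a c /\ ple b c.

Definition cofinite (A : Poset) : Prop :=
  forall a : A, exists l : list A, forall b : A, ple b a -> In b l.

Definition infinite_height (A : Poset) : Prop :=
  forall n : nat, exists f : nat -> A, forall k, k < n -> plt (f k) (f (S k)).

(** A functor A -> C, with A a poset seen as a category (u -> v iff u >= v). *)
Record Diagram (C : Category) (A : Poset) := {
  dob :> A -> C;
  dmap : forall u v : A, ple v u -> Hom (dob u) (dob v);
  dmap_id : forall u (h : ple u u), dmap h = idm (dob u);
  dmap_comp : forall u v w (h1 : ple v u) (h2 : ple w v) (h3 : ple w u),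
      dmap h3 = comp (dmap h2) (dmap h1)
}.
Arguments dmap {C A} d {u v} _.

Record ProObj (C : Category) := {
  pro_idx : Poset;
  pro_dir : directed pro_idx;
  pro_diag : Diagram C pro_idx
}.

Section ProHom.
Variables (C : Category) (X Y : ProObj C).
Let I := pro_idx X.
Let J := pro_idx Y.
Let Xd := pro_diag X.
Let Yd := pro_diag Y.

(** representatives of elements of colim_t Hom(X_t, Y_s) *)
Definition germ (s : J) := { t : I & Hom (Xd t) (Yd s) }.

(** the identification in the filtered colimit colim_t Hom(X_t, Y_s) *)
Definition germ_eq (s : J) (g g' : germ s) : Prop :=
  exists (t'' : I) (h : ple (projT1 g) t'') (h' : ple (projT1 g') t''),
    comp (projT2 g) (dmap Xd h) = comp (projT2 g') (dmap Xd h').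

Definition germ_post (s s' : J) (h : ple s' s) (g : germ s) : germ s' :=
  existT _ (projT1 g) (comp (dmap Yd h) (projT2 g)).

(** elements of lim_s colim_t Hom(X_t, Y_s) *)
Record ProHom := {
  ph_fam : forall s : J, germ s;
  ph_compat : forall (s s' : J) (h : ple s' s),
      germ_eq (germ_post h (ph_fam s)) (ph_fam s')
}.

Definition ProHom_eq (g g' : ProHom) : Prop :=
  forall s : J, germ_eq (ph_fam g s) (ph_fam g' s).
End ProHom.

Record BarProObj (C : Category) := {
  bp_idx : Poset;
  bp_dir : directed bp_idx;
  bp_cofinite : cofinite bp_idx;
  bp_infheight : infinite_height bp_idx;
  bp_diag : Diagram C bp_idx
}.

Definition i_obj (C : Category) (X : BarProObj C) : ProObj C :=
  {| pro_idx := bp_idx X; pro_dir := bp_dir X; pro_diag := bp_diag X |}.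

Definition strictly_increasing (A B : Poset) (f : B -> A) : Prop :=
  forall b b' : B, plt b b' -> plt (f b) (f b').

Record BarPair (C : Category) (X Y : BarProObj C) := {
  bpa : bp_idx Y -> bp_idx X;
  bpa_incr : strictly_increasing bpa;
  bpphi : forall b, Hom (bp_diag X (bpa b)) (bp_diag Y b);
  bpphi_nat : forall (b b' : bp_idx Y) (h : ple b' b) (h' : ple (bpa b') (bpa b)),
      comp (dmap (bp_diag Y) h) (bpphi b) = comp (bpphi b') (dmap (bp_diag X) h')
}.

(** the order on pairs; morphisms of \bar{Pro}(C) are its connected components *)
Definition BarPair_le (C : Category) (X Y : BarProObj C) (p q : BarPair X Y) : Prop :=
  exists H : forall b, ple (bpa p b) (bpa q b),
    forall b, bpphi q b = comp (bpphi p b) (dmap (bp_diag X) (H b)).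

Lemma strictly_increasing_mono (A B : Poset) (f : B -> A) :
  strictly_increasing f -> forall b' b : B, ple b' b -> ple (f b') (f b).
Proof.
  intros Hf b' b h.
  destruct (Classical_Prop.classic (b' = b)) as [e|ne].
  - subst; apply ple_refl.
  - exact (proj1 (Hf b' b (conj h ne))).
Qed.

Lemma i_pair_compat (C : Category) (X Y : BarProObj C) (p : BarPair X Y) :
  forall (s s' : bp_idx Y) (h : ple s' s),
    germ_eq (X := i_obj X) (Y := i_obj Y)
      (germ_post (X := i_obj X) (Y := i_obj Y) h
         (existT (fun t => Hom (bp_diag X t) (bp_diag Y s)) (bpa p s) (bpphi p s)))
      (existT (fun t => Hom (bp_diag X t) (bp_diag Y s')) (bpa p s') (bpphi p s')).
Proof.
  intros s s' h.
  pose proof (strictly_increasing_mono (bpa_incr p) h) as h'.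
  exists (bpa p s), (ple_refl _), h'; simpl.
  rewrite dmap_id, comp_idr.
  apply bpphi_nat.
Qed.

Definition i_pair (C : Category) (X Y : BarProObj C) (p : BarPair X Y)
  : ProHom (i_obj X) (i_obj Y) :=
  @Build_ProHom C (i_obj X) (i_obj Y) (fun b : bp_idx Y =>
    existT (fun t => Hom (bp_diag X t) (bp_diag Y b)) (bpa p b) (bpphi p b))
    (i_pair_compat p).

(* Main.v *)
Require Import Defs.
From Stdlib Require Import Arith List Classical ProofIrrelevance Lia FunctionalExtensionality IndefiniteDescription.
Import ListNotations.

Lemma plt_ple_trans (A:Poset) (a b c:A) : plt a b -> ple b c -> plt a c.
Proof.
  intros [h1 h2] h3. split. eapply ple_trans; eauto.
  intro e; subst c. apply h2. apply ple_antisym; auto.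
Qed.

Lemma ple_plt_trans (A:Poset) (a b c:A) : ple a b -> plt b c -> plt a c.
Proof.
  intros h1 [h2 h3]. split. eapply ple_trans; eauto.
  intro e; subst c. apply h3. apply ple_antisym; auto.
Qed.

Lemma no_max (A:Poset) : directed A -> cofinite A -> infinite_height A ->
  forall a:A, exists a', plt a a'.
Proof.
  intros [_ Hd] Hc Hh a. destruct (Hc a) as [l Hl].
  destruct (Hh (S (length l))) as [f Hf].
  assert (Hch: forall j i, i < j -> j <= S (length l) -> plt (f i) (f j)).
  { induction j; intros i Hij Hjn. lia.
    assert (Hs : plt (f j) (f (S j))) by (apply Hf; lia).
    destruct (Nat.eq_dec i j). subst; auto.
    eapply plt_ple_trans. apply IHj; lia. apply (proj1 Hs). }
  destruct (Hd a (f (S (length l)))) as [d [Had Hfd]].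
  exists d. split; auto. intro e. subst d.
  assert (Hinc: incl (map f (seq 0 (S (S (length l))))) l).
  { intros x Hx. apply in_map_iff in Hx. destruct Hx as [k [<- Hk]].
    apply in_seq in Hk. apply Hl.
    destruct (Nat.eq_dec k (S (length l))). subst; auto.
    eapply ple_trans. apply (proj1 (Hch (S (length l)) k ltac:(lia) ltac:(lia))). auto. }
  assert (Hnd: NoDup (map f (seq 0 (S (S (length l)))))).
  { apply NoDup_map_NoDup_ForallPairs; [|apply seq_NoDup].
    intros i j Hi Hj e. apply in_seq in Hi. apply in_seq in Hj.
    destruct (Nat.lt_total i j) as [lt|[eq|gt]]; auto.
    - exfalso. apply (proj2 (Hch j i lt ltac:(lia))); auto.
    - exfalso. apply (proj2 (Hch i j gt ltac:(lia))); auto. }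
  pose proof (NoDup_incl_length Hnd Hinc) as H.
  rewrite length_map, length_seq in H. lia.
Qed.

Lemma remove_one (B:Type) (x:B) l : In x l ->
  exists l', length l' < length l /\ forall y, In y l -> y <> x -> In y l'.
Proof.
  induction l as [|a l IH]; intros Hx; [destruct Hx|].
  destruct (classic (a = x)) as [e|ne].
  - exists l. split. simpl; lia. intros y [<-|Hy] Hyx; [congruence|auto].
  - destruct Hx as [e|Hx]; [congruence|].
    destruct (IH Hx) as [l0 [Hlen Hin]]. exists (a :: l0). split. simpl; lia.
    intros y [<-|Hy] Hyx; [left; auto|right; auto].
Qed.

Lemma acc_aux (B:Poset) : forall n (b:B) l, length l <= n ->
  (forall c, ple c b -> In c l) -> Acc (fun x y : B => plt x y) b.
Proof.
  induction n; intros b l Hlen Hl.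
  - destruct l; [|simpl in Hlen; lia]. destruct (Hl b (ple_refl _)).
  - constructor. intros b' [hle hne].
    destruct (@remove_one _ b l (Hl b (ple_refl _))) as [l' [Hlen' Hin]].
    apply (IHn b' l'). lia.
    intros c Hc. apply Hin. apply Hl. eapply ple_trans; eauto.
    intro e; subst c. apply hne. apply ple_antisym; auto.
Qed.

Lemma wf_cof (B:Poset) : cofinite B -> well_founded (fun x y : B => plt x y).
Proof.
  intros Hc b. destruct (Hc b) as [l Hl]. exact (@acc_aux B _ b l (le_n _) Hl).
Qed.

Lemma ub_list (A B : Poset) (a0 : A)
  (dirA : forall a b : A, exists c, ple a c /\ ple b c)
  (P : B -> A -> Prop) (l : list B) :
  (forall c, In c l -> exists a, P c a) ->
  (forall c a a', P c a -> ple a a' -> P c a') ->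
  exists a, forall c, In c l -> P c a.
Proof.
  intros H Hm. induction l as [|c0 l IH].
  - exists a0. intros c [].
  - destruct IH as [a1 Ha1]. intros c Hc; apply H; right; auto.
    destruct (H c0 (or_introl eq_refl)) as [a2 Ha2].
    destruct (dirA a1 a2) as [u [Hu1 Hu2]]. exists u.
    intros c [<-|Hc]; eapply Hm; eauto.
Qed.

Theorem proposition3p4 :
  forall (C : Category) (X Y : BarProObj C) (g : ProHom (i_obj X) (i_obj Y)),
    exists p : BarPair X Y, ProHom_eq (i_pair p) g.
Proof.
  intros C X Y g.
  pose (t := fun s : bp_idx Y => (projT1 (ph_fam g s) : bp_idx X)).
  pose (f := fun s : bp_idx Y =>
    (projT2 (ph_fam g s) : Hom (bp_diag X (t s)) (bp_diag Y s))).
  destruct (bp_dir X) as [[ax _] dirX].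
  pose (Spec := fun (b : bp_idx Y) (rec : forall b', plt b' b -> bp_idx X) (a : bp_idx X) =>
    (forall b' (h : ple b' b), exists t'' (h1 : ple (t b) t'') (h2 : ple (t b') t''),
        comp (comp (dmap (bp_diag Y) h) (f b)) (dmap (bp_diag X) h1)
        = comp (f b') (dmap (bp_diag X) h2) /\ ple t'' a)
    /\ (forall b' (h : plt b' b), plt (rec b' h) a)).
  assert (Hex : forall b rec, exists a, Spec b rec a).
  { intros b rec. destruct (@bp_cofinite _ Y b) as [l Hl].
    destruct (@ub_list _ _ ax dirX (fun c a =>
      (forall h : ple c b, exists t'' (h1 : ple (t b) t'') (h2 : ple (t c) t''),
        comp (comp (dmap (bp_diag Y) h) (f b)) (dmap (bp_diag X) h1)
        = comp (f c) (dmap (bp_diag X) h2) /\ ple t'' a)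
      /\ (forall h : plt c b, ple (rec c h) a)) l) as [a0 Ha0].
    - intros c _. destruct (classic (ple c b)) as [hc|hc].
      + destruct (ph_compat g hc) as [t'' [h1 [h2 Heq]]].
        destruct (classic (plt c b)) as [hp|hp].
        * destruct (dirX t'' (rec c hp)) as [u [Hu1 Hu2]]. exists u. split.
          -- intro h. rewrite (proof_irrelevance _ h hc). exists t'', h1, h2.
             split; [exact Heq | exact Hu1].
          -- intro h. rewrite (proof_irrelevance _ h hp). exact Hu2.
        * exists t''. split.
          -- intro h. rewrite (proof_irrelevance _ h hc). exists t'', h1, h2.
             split; [exact Heq | apply ple_refl].
          -- intro h; contradiction.
      + exists ax. split; intro h; exfalso; [auto | apply hc, (proj1 h)].
    - intros c a a' [H1 H2] Haa'. split.
      + intro h; destruct (H1 h) as [t'' [h1 [h2 [Heq Hle]]]].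
        exists t'', h1, h2; split; auto. eapply ple_trans; eauto.
      + intro h; eapply ple_trans; eauto.
    - destruct (@no_max _ (@bp_dir _ X) (@bp_cofinite _ X) (@bp_infheight _ X) a0) as [a Ha].
      exists a. split.
      + intros b' h. destruct (proj1 (Ha0 b' (Hl b' h)) h) as [t'' [h1 [h2 [Heq Hle]]]].
        exists t'', h1, h2; split; auto. eapply ple_trans; [exact Hle| exact (proj1 Ha)].
      + intros b' h. eapply ple_plt_trans.
        exact (proj2 (Ha0 b' (Hl b' (proj1 h))) h). exact Ha. }
  pose (F := fun b rec => proj1_sig (constructive_indefinite_description _ (Hex b rec))).
  pose (alpha := Fix (@wf_cof _ (@bp_cofinite _ Y)) (fun _ => bp_idx X) F).
  assert (E : forall b, alpha b = F b (fun b' _ => alpha b')).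
  { intro b. unfold alpha. rewrite Fix_eq; [reflexivity|].
    intros x f1 f2 H. assert (f1 = f2) as ->; [|reflexivity].
    apply functional_extensionality_dep; intro y.
    apply functional_extensionality_dep; intro p. apply H. }
  assert (Ha : forall b, Spec b (fun b' _ => alpha b') (alpha b)).
  { intro b. rewrite (E b). unfold F.
    exact (proj2_sig (constructive_indefinite_description _ (Hex b _))). }
  assert (Ht : forall b, ple (t b) (alpha b)).
  { intro b. destruct (proj1 (Ha b) b (ple_refl _)) as [t'' [h1 [h2 [Heq Hle]]]].
    eapply ple_trans; eauto. }
  pose (phi := fun b => comp (f b) (dmap (bp_diag X) (Ht b))).
  assert (Hincr : strictly_increasing alpha).
  { intros b' b h. exact (proj2 (Ha b) b' h). }
  assert (Hnat : forall (b b' : bp_idx Y) (h : ple b' b) (h' : ple (alpha b') (alpha b)),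
      comp (dmap (bp_diag Y) h) (phi b) = comp (phi b') (dmap (bp_diag X) h')).
  { intros b b' h h'.
    destruct (proj1 (Ha b) b' h) as [t'' [h1 [h2 [Heq Hle]]]].
    unfold phi.
    rewrite (dmap_comp (bp_diag X) Hle h1 (Ht b)).
    rewrite !comp_assoc. rewrite Heq.
    pose (pf := ple_trans h2 Hle).
    rewrite <- !comp_assoc.
    rewrite <- (dmap_comp (bp_diag X) Hle h2 pf).
    rewrite <- (dmap_comp (bp_diag X) h' (Ht b') pf). reflexivity. }
  exists {| bpa := alpha; bpa_incr := Hincr; bpphi := phi; bpphi_nat := Hnat |}.
  intro s. exists (alpha s), (ple_refl _), (Ht s). simpl.
  rewrite dmap_id, comp_idr. reflexivity.
Qed.
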